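(* Let $\ell_1,\ell_2,\ell_3,\ell_4$ be pairwise skew lines in $\mathbb{P}^3$ (over $\mathbb{C}$), and suppose that there is a unique line $\ell\subset\mathbb{P}^3$ that intersects all of $\ell_1,\ell_2,\ell_3,\ell_4$. Let $\pi\colon Y\to\mathbb{P}^3$ be the blow up of $\ell$, with exceptional divisor $E\cong\mathbb{P}^1\times\mathbb{P}^1$, and let $\tilde{\ell}_1,\ldots,\tilde{\ell}_4$ be the proper transforms on $Y$ of $\ell_1,\ldots,\ell_4$. Then there exists a unique curve $C\subset E$ of bi-degree $(1,1)$ that intersects each of $\tilde{\ell}_1,\tilde{\ell}_2,\tilde{\ell}_3,\tilde{\ell}_4$. *)

(* Defs.v *)
From HB Require Import structures.
From mathcomp Require Import all_boot all_order all_algebra.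
From mathcomp Require Import complex.
From mathcomp Require Import Rstruct.
From Stdlib Require Import Reals.
Set Implicit Arguments. Unset Strict Implicit. Unset Printing Implicit Defensive.
Import Order.TTheory GRing.Theory Num.Theory.
Local Open Scope ring_scope.

Definition CC : closedFieldType := (Rdefinitions.R)[i].

(* Projective 3-space P^3(C): points are nonzero row vectors x : 'rV[CC]_4
   (up to scaling).  A line of P^3 is given by a 2 x 4 matrix of rank 2,
   i.e. the projectivization of its 2-dimensional row space. *)
Definition is_line (L : 'M[CC]_(2,4)) : bool := \rank L == 2.

Definition on_line (x : 'rV[CC]_4) (L : 'M[CC]_(2,4)) : bool :=
  (x != 0) && (x <= L)%MS.

Definition lines_meet (L M : 'M[CC]_(2,4)) : Prop :=
  exists x : 'rV[CC]_4, on_line x L /\ on_line x M.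

Definition skew_lines (L M : 'M[CC]_(2,4)) : Prop := ~ lines_meet L M.

(* Y = { ([x],[v]) in P^3 x P(C^4/l) : x lies in the plane <l, v> },
   where the second factor P(C^4/l) (= the pencil of planes through l)
   has points represented by vectors v not in l, [v] = [v'] iff
   v' in C^* v + l.  The blow-up map pi is the first projection. *)
Definition blowup_pt (L : 'M[CC]_(2,4)) (x v : 'rV[CC]_4) : Prop :=
  x != 0 /\ ~~ (v <= L)%MS /\ (x <= col_mx L v)%MS.

(* The exceptional divisor E = pi^{-1}(l) = l x P(C^4/l) ~ P^1 x P^1. *)
Definition exc_pt (L : 'M[CC]_(2,4)) (x v : 'rV[CC]_4) : Prop :=
  blowup_pt L x v /\ (x <= L)%MS.

Definition proper_transform_pt (L M : 'M[CC]_(2,4)) (x v : 'rV[CC]_4) : Prop :=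
  blowup_pt L x v /\ (x <= M)%MS /\ (M <= col_mx L v)%MS.

(* A curve of bidegree (1,1) on E = P(l) x P(C^4/l): the zero locus of a
   nonzero bilinear form on l x (C^4/l).  Such a form is given by a 4x4
   matrix B with  L B L^T = 0  (so that b(x,v) = x B v^T only depends on v
   modulo l) and  L B <> 0  (nonzero on l x C^4/l).
   A curve is a subset of E, represented as a predicate on representatives. *)
Definition bideg11_curve (L : 'M[CC]_(2,4))
    (C : 'rV[CC]_4 -> 'rV[CC]_4 -> Prop) : Prop :=
  exists B : 'M[CC]_4,
    L *m B *m L^T = 0 /\ L *m B != 0 /\
    forall x v, C x v <-> (exc_pt L x v /\ x *m B *m v^T = 0).

Definition meets_transform (L M : 'M[CC]_(2,4))
    (C : 'rV[CC]_4 -> 'rV[CC]_4 -> Prop) : Prop :=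
  exists x v, C x v /\ proper_transform_pt L M x v.

(* Main.v *)
Require Import Defs.
From HB Require Import structures.
From mathcomp Require Import all_boot all_order all_algebra.
From mathcomp Require Import complex.
From mathcomp Require Import Rstruct.
From Stdlib Require Import Reals.
From mathcomp Require Import ring.
Import Order.TTheory GRing.Theory Num.Theory.
Local Open Scope ring_scope.

Lemma split_line (L : 'M[CC]_(2,4)) : \rank L = 2%N ->
  exists (Z : 'M[CC]_(2,4)) (PL PW : 'M[CC]_(4,2)),
  [/\ L *m PL = 1%:M, L *m PW = 0, Z *m PL = 0, Z *m PW = 1%:M &
      PL *m L + PW *m Z = 1%:M].
Proof.
move=> rL.
set R := row_ebase L; set C := col_ebase L.
have eL : L = C *m (row_mx 1%:M 0 : 'M_(2, 2 + 2)) *m R.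
  by rewrite -pid_mx_row -{1}[L]mulmx_ebase rL.
pose E1 : 'M[CC]_(2, 2 + 2) := row_mx 1%:M 0.
pose E2 : 'M[CC]_(2, 2 + 2) := row_mx 0 1%:M.
have uR : R \in unitmx by exact: row_ebase_unit.
have uC : C \in unitmx by exact: col_ebase_unit.
exists (E2 *m R), (invmx R *m E1^T *m invmx C), (invmx R *m E2^T).
have h11 : E1 *m E1^T = 1%:M by rewrite tr_row_mx mul_row_col trmx1 trmx0 mulmx1 mulmx0 addr0.
have h12 : E1 *m E2^T = 0 by rewrite tr_row_mx mul_row_col trmx1 trmx0 mulmx1 mulmx0 addr0.
have h21 : E2 *m E1^T = 0 by rewrite tr_row_mx mul_row_col trmx1 trmx0 mulmx1 mulmx0 add0r.
have h22 : E2 *m E2^T = 1%:M by rewrite tr_row_mx mul_row_col trmx1 trmx0 mulmx1 mulmx0 add0r.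
have hs : E1^T *m E1 + E2^T *m E2 = 1%:M.
  rewrite !tr_row_mx !mul_col_row !trmx1 !trmx0 !mul0mx !mulmx0 !mul1mx add_block_mx.
  by rewrite !addr0 !add0r -scalar_mx_block.
rewrite eL; split.
- by rewrite -!mulmxA (mulmxA R) mulmxV // mul1mx (mulmxA E1) h11 mul1mx mulmxV.
- by rewrite -!mulmxA (mulmxA R) mulmxV // mul1mx h12 mulmx0.
- by rewrite -!mulmxA (mulmxA R) mulmxV // mul1mx (mulmxA E2) h21 mul0mx.
- by rewrite -!mulmxA (mulmxA R) mulmxV // mul1mx h22.
- rewrite -!mulmxA (mulmxA (invmx C)) mulVmx // mul1mx.
  by rewrite !mulmxA -mulmxDl -(mulmxA _ E1^T) -(mulmxA _ E2^T) -mulmxDr hs mulmx1 mulVmx.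
Qed.

Definition D2 (x y : 'rV[CC]_2) : CC := x 0 0 * y 0 1 - x 0 1 * y 0 0.

Lemma ord2P (P : 'I_2 -> Prop) : P 0 -> P 1 -> forall j, P j.
Proof. move=> P0 P1 [[|[|j]] Hj] //=.
- by have -> : Ordinal Hj = 0 by apply/val_inj.
- by have -> : Ordinal Hj = 1 by apply/val_inj.
Qed.

Lemma rv2P (u v : 'rV[CC]_2) : u 0 0 = v 0 0 -> u 0 1 = v 0 1 -> u = v.
Proof. by move=> h0 h1; apply/rowP; apply: ord2P. Qed.

Lemma rv2_neq0 (u : 'rV[CC]_2) : u != 0 -> u 0 0 != 0 \/ u 0 1 != 0.
Proof.
move=> hu; case: (eqVneq (u 0 0) 0) => h0; last by left.
case: (eqVneq (u 0 1) 0) => h1; last by right.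
by move: hu; rewrite (@rv2P u 0) ?eqxx // mxE.
Qed.

Lemma par2 (u c : 'rV[CC]_2) : c != 0 -> D2 u c = 0 -> exists s, u = s *: c.
Proof.
rewrite /D2 => /rv2_neq0 [] hc hD.
- exists (u 0 0 / c 0 0); apply: rv2P; rewrite !mxE.
    by rewrite mulfVK.
  apply/eqP; rewrite -subr_eq0; apply/eqP.
  have -> : u 0 1 - u 0 0 / c 0 0 * c 0 1 = - (u 0 0 * c 0 1 - u 0 1 * c 0 0) / c 0 0.
    by field.
  by rewrite hD oppr0 mul0r.
- exists (u 0 1 / c 0 1); apply: rv2P; rewrite !mxE; last by rewrite mulfVK.
  apply/eqP; rewrite -subr_eq0; apply/eqP.
  have -> : u 0 0 - u 0 1 / c 0 1 * c 0 0 = (u 0 0 * c 0 1 - u 0 1 * c 0 0) / c 0 1.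
    by field.
  by rewrite hD mul0r.
Qed.

Lemma span2 (c d y : 'rV[CC]_2) : D2 c d != 0 ->
  y = (D2 y d / D2 c d) *: c + (D2 c y / D2 c d) *: d.
Proof.
rewrite /D2 => hD; apply: rv2P; by rewrite !mxE; field.
Qed.

Lemma vecmul2 (h : 'rV[CC]_2) (G : 'M[CC]_2) j :
  (h *m G) 0 j = h 0 0 * G 0 j + h 0 1 * G 1 j.
Proof.
have e : lift ord0 ord0 = 1 :> 'I_2 by apply/val_inj.
by rewrite mxE !big_ord_recl big_ord0 addr0 e.
Qed.

Definition fX (X : 'M[CC]_2) (c h : 'rV[CC]_2) : CC := (c *m X *m h^T) 0 0.

Lemma fXE X c h : fX X c h =
  c 0 0 * X 0 0 * h 0 0 + c 0 0 * X 0 1 * h 0 1 +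
  c 0 1 * X 1 0 * h 0 0 + c 0 1 * X 1 1 * h 0 1.
Proof.
have e : lift ord0 ord0 = 1 :> 'I_2 by apply/val_inj.
rewrite /fX mxE !big_ord_recl big_ord0 e !mxE !big_ord_recl !big_ord0 !e /=. rewrite !addr0. ring.
Qed.

Lemma fX_delta (X : 'M[CC]_2) i j : fX X (delta_mx 0 i) (delta_mx 0 j) = X i j.
Proof.
rewrite fXE !mxE.
by move: i j; apply: ord2P; apply: ord2P; rewrite /= ?mulr1 ?mulr0 ?mul1r ?mul0r ?addr0 ?add0r.
Qed.

Lemma fX_expand X u1 u2 w1 w2 u w :
  fX X u w * (D2 u1 u2 * D2 w1 w2) =
  D2 u u2 * D2 w w2 * fX X u1 w1 + D2 u u2 * D2 w1 w * fX X u1 w2 +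
  D2 u1 u * D2 w w2 * fX X u2 w1 + D2 u1 u * D2 w1 w * fX X u2 w2.
Proof. rewrite !fXE /D2; ring. Qed.

Section Uniq.
Variables (u1 u2 u3 w1 w2 w3 : 'rV[CC]_2).
Hypotheses (hu12 : D2 u1 u2 != 0) (hu13 : D2 u1 u3 != 0) (hu23 : D2 u2 u3 != 0).
Hypotheses (hw12 : D2 w1 w2 != 0) (hw13 : D2 w1 w3 != 0) (hw23 : D2 w2 w3 != 0).

Let pp u w := D2 u u2 * D2 w1 w.
Let qq u w := D2 u1 u * D2 w w2.
Let gg u w := pp u w * qq u3 w3 - qq u w * pp u3 w3.

Lemma key_form X : X != 0 -> fX X u1 w1 = 0 -> fX X u2 w2 = 0 -> fX X u3 w3 = 0 ->
  forall u w, (fX X u w == 0) = (gg u w == 0).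
Proof.
move=> hX h1 h2 h3.
have hD : D2 u1 u2 * D2 w1 w2 != 0 by rewrite mulf_neq0.
have hp3 : pp u3 w3 != 0.
  rewrite /pp; have -> : D2 u3 u2 = - D2 u2 u3 by rewrite /D2; ring.
  by rewrite mulf_neq0 ?oppr_eq0.
have hq3 : qq u3 w3 != 0.
  rewrite /qq; have -> : D2 w3 w2 = - D2 w2 w3 by rewrite /D2; ring.
  by rewrite mulf_neq0 ?oppr_eq0.
have E u w : fX X u w * (D2 u1 u2 * D2 w1 w2) =
    pp u w * fX X u1 w2 + qq u w * fX X u2 w1.
  by rewrite fX_expand h1 h2 /pp /qq; ring.
have E3 := E u3 w3; rewrite h3 mul0r in E3.
have Y21 : fX X u2 w1 = - pp u3 w3 * fX X u1 w2 / qq u3 w3.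
  apply: (mulfI hq3); rewrite [RHS]mulrC divfK //.
  by move: E3 => /esym /eqP; rewrite addrC addr_eq0 => /eqP ->; ring.
have hY : fX X u1 w2 != 0.
  apply: contra hX => /eqP hY; apply/eqP/matrixP => i j.
  rewrite -fX_delta mxE; apply: (mulIf hD); rewrite E Y21 hY; ring.
move=> u w.
have G : fX X u w * (D2 u1 u2 * D2 w1 w2) * qq u3 w3 = fX X u1 w2 * gg u w.
  by rewrite E Y21 /gg; field.
apply/eqP/eqP => h.
- apply/eqP; move/eqP: h; apply: contraLR => hg.
  have : fX X u w * (D2 u1 u2 * D2 w1 w2) * qq u3 w3 != 0 by rewrite G mulf_neq0.
  by apply: contraNneq => ->; rewrite !mul0r.
- have : fX X u w * (D2 u1 u2 * D2 w1 w2 * qq u3 w3) = 0 by rewrite mulrA G h mulr0.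
  by move/eqP; rewrite mulf_eq0 mulf_eq0 (negbTE hD) (negbTE hq3) !orbF => /eqP.
Qed.

Lemma forms_equiv X X' : X != 0 -> X' != 0 ->
  fX X u1 w1 = 0 -> fX X u2 w2 = 0 -> fX X u3 w3 = 0 ->
  fX X' u1 w1 = 0 -> fX X' u2 w2 = 0 -> fX X' u3 w3 = 0 ->
  forall u w, (fX X u w == 0) = (fX X' u w == 0).
Proof.
move=> hX hX' a1 a2 a3 b1 b2 b3 u w.
by rewrite (key_form X hX a1 a2 a3) (key_form X' hX' b1 b2 b3).
Qed.

End Uniq.

Lemma fXZl X a c h : fX X (a *: c) h = a * fX X c h.
Proof. rewrite !fXE !mxE; ring. Qed.
Lemma fXZr X a c h : fX X c (a *: h) = a * fX X c h.
Proof. rewrite !fXE !mxE; ring. Qed.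
Lemma D2Bl x y c : D2 (x - y) c = D2 x c - D2 y c.
Proof. rewrite /D2 !mxE; ring. Qed.

Set Implicit Arguments. Unset Strict Implicit. Unset Printing Implicit Defensive.

Lemma mul_rv2_col (v : 'rV[CC]_2) (p r : 'rV[CC]_4) :
  v *m (col_mx p r : 'M_(1 + 1, 4)) = v 0 0 *: p + v 0 1 *: r.
Proof.
apply/rowP => j; rewrite !mxE !big_ord_recl big_ord0 addr0 /=.
have e0 : (ord0 : 'I_(1+1)) = lshift 1 (0 : 'I_1) by apply/val_inj.
have e1 : (lift ord0 ord0 : 'I_(1+1)) = rshift 1 (0 : 'I_1) by apply/val_inj.
have e0' : (ord0 : 'I_2) = 0 by apply/val_inj.
have e1' : (lift ord0 ord0 : 'I_2) = 1 by apply/val_inj.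
have c1 : col_mx p r (lift ord0 ord0) j = r 0 j by rewrite e1; exact: col_mxEd.
have c0 : col_mx p r ord0 j = p 0 j by rewrite e0; exact: col_mxEu.
by rewrite c1 c0 e0' e1'.
Qed.

Lemma mx11_mul n (D : 'M[CC]_1) (p : 'rV[CC]_n) : D *m p = D 0 0 *: p.
Proof. by rewrite {1}(mx11_scalar D) mul_scalar_mx. Qed.

Lemma m11_0 (M : 'M[CC]_1) : (M = 0) <-> (M 0 0 = 0).
Proof.
split => [->|h0]; first by rewrite mxE.
by apply/matrixP => i j; rewrite !ord1 h0 mxE.
Qed.

Lemma sub_colL m (L : 'M[CC]_(m,4)) (x v : 'rV[CC]_4) :
  (x <= L)%MS -> (x <= col_mx L v)%MS.
Proof.
case/submxP => D ->.
have -> : D *m L = row_mx D 0 *m col_mx L v by rewrite mul_row_col mul0mx addr0.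
exact: submxMl.
Qed.

Lemma sub_colv m (L : 'M[CC]_(m,4)) (v : 'rV[CC]_4) : (v <= col_mx L v)%MS.
Proof.
apply/submxP; exists (row_mx 0 1%:M).
by rewrite mul_row_col mul0mx add0r mul1mx.
Qed.

Section Split.
Variables (L Z : 'M[CC]_(2,4)) (PL PW : 'M[CC]_(4,2)).
Hypotheses (hLPL : L *m PL = 1%:M) (hLPW : L *m PW = 0) (hZPL : Z *m PL = 0)
  (hZPW : Z *m PW = 1%:M) (hid : PL *m L + PW *m Z = 1%:M).

Lemma decomp (v : 'rV[CC]_4) : v = (v *m PL) *m L + (v *m PW) *m Z.
Proof. by rewrite -!mulmxA -mulmxDr hid mulmx1. Qed.

Lemma subL (v : 'rV[CC]_4) : (v <= L)%MS = (v *m PW == 0).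
Proof.
apply/idP/idP.
  by case/submxP => D ->; rewrite -mulmxA hLPW mulmx0.
by move/eqP => h; rewrite (decomp v) h mul0mx addr0 submxMl.
Qed.

Lemma subL_eq (v : 'rV[CC]_4) : (v <= L)%MS -> v = (v *m PL) *m L.
Proof. by rewrite subL => /eqP h; rewrite {1}(decomp v) h mul0mx addr0. Qed.

Lemma form_rel (B : 'M[CC]_4) (x v : 'rV[CC]_4) : L *m B *m L^T = 0 -> (x <= L)%MS ->
  x *m B *m v^T = (x *m PL) *m (L *m B *m Z^T) *m (v *m PW)^T.
Proof.
move=> hB hx.
rewrite {1}(subL_eq hx) {1}(decomp v) linearD /= !trmx_mul.
rewrite mulmxDr !mulmxA -!(mulmxA (x *m PL)) hB.
by rewrite !mul0mx mulmx0 add0r !mulmxA.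
Qed.

Lemma X_neq0 (B : 'M[CC]_4) : L *m B *m L^T = 0 -> L *m B != 0 -> L *m B *m Z^T != 0.
Proof.
move=> hB; apply: contra => /eqP h.
have : (PL *m L + PW *m Z)^T = 1%:M by rewrite hid trmx1.
rewrite linearD /= !trmx_mul => e.
by rewrite -[L *m B]mulmx1 -e mulmxDr !mulmxA hB h !mul0mx addr0.
Qed.

Variable l : 'I_4 -> 'M[CC]_(2,4).
Hypothesis hl : forall i, \rank (l i) = 2%N.
Hypothesis hskew : forall i j, i != j -> skew_lines (l i) (l j).
Hypothesis hmeet : forall i, lines_meet L (l i).
Hypothesis hrL : \rank L = 2%N.

Lemma meetb i : exists x, on_line x L && on_line x (l i).
Proof. by case: (hmeet i) => x [h1 h2]; exists x; rewrite h1 h2. Qed.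

Definition p i := xchoose (meetb i).
Definition r i := if ~~ (row 0 (l i) <= L)%MS then row 0 (l i) else row 1 (l i).
Definition c i := p i *m PL.
Definition a i := r i *m PL.
Definition h i := r i *m PW.

Lemma p_prop i : [/\ p i != 0, (p i <= L)%MS & (p i <= l i)%MS].
Proof.
have := xchooseP (meetb i); rewrite -/(p i) /on_line.
by case/andP => /andP[-> ->] /andP[_ ->].
Qed.

Lemma p_eq i : p i = c i *m L.
Proof. by case: (p_prop i) => _ hL _; exact: subL_eq. Qed.

Lemma c_neq0 i : c i != 0.
Proof. by case: (p_prop i) => hp _ _; apply: contraNneq hp => hc; rewrite p_eq hc mul0mx. Qed.

Lemma meet_skew i j (x : 'rV[CC]_4) : i != j -> x != 0 -> (x <= l i)%MS -> (x <= l j)%MS -> False.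
Proof.
move=> hij hx hi hj; apply: (hskew hij); exists x.
by rewrite /on_line hx hi hj.
Qed.

Lemma lnotL i : ~~ (l i <= L)%MS.
Proof.
apply/negP => hsub.
have hLl : (L <= l i)%MS.
  have := (mxrank_leqif_eq hsub).2; rewrite hl hrL eqxx => /esym /andP[].
  by [].
pose j : 'I_4 := if i == 0 then 1 else 0.
have hij : i != j by rewrite /j; case: (eqVneq i 0) => [->|//].
case: (hmeet j) => x [/andP[hx hxL] /andP[_ hxj]].
exact: (meet_skew hij hx (submx_trans hxL hLl) hxj).
Qed.

Lemma r_prop i : (r i <= l i)%MS /\ ~~ (r i <= L)%MS.
Proof.
rewrite /r; case: ifP => [h0|/negbFE h0]; first by rewrite row_sub.
split; first by rewrite row_sub.
apply: contra (lnotL i) => h1; apply/row_subP; apply: ord2P => //.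
Qed.

Lemma h_neq0 i : h i != 0.
Proof. by case: (r_prop i) => _; rewrite subL. Qed.

Lemma r_eq i : r i = a i *m L + h i *m Z.
Proof. exact: decomp. Qed.

Lemma pr_free i : \rank (col_mx (p i) (r i) : 'M_(1 + 1, 4)) = 2%N.
Proof.
apply/eqP; apply: inj_row_free => v.
rewrite mul_rv2_col => hv.
have hv1 : v 0 1 = 0.
  have := congr1 (mulmx^~ PW) hv; rewrite mul0mx mulmxDl -!scalemxAl.
  case: (p_prop i) => _; rewrite subL => /eqP -> _; rewrite scaler0 add0r.
  by move/eqP; rewrite scaler_eq0 (negbTE (h_neq0 i)) orbF => /eqP.
move: hv; rewrite hv1 scale0r addr0 => /eqP; rewrite scaler_eq0.
case: (p_prop i) => hp _ _; rewrite (negbTE hp) orbF => /eqP hv0.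
by apply: rv2P; rewrite ?hv0 ?hv1 mxE.
Qed.

Lemma l_sub_pr i : (l i <= col_mx (p i) (r i))%MS.
Proof.
have hs : (col_mx (p i) (r i) <= l i)%MS.
  by case: (p_prop i) => _ _ hp; case: (r_prop i) => hr _; rewrite col_mx_sub hp hr.
have := (mxrank_leqif_eq hs).2; rewrite pr_free hl eqxx => /esym /andP[].
by [].
Qed.

Lemma l_span i x : (x <= l i)%MS -> exists al be, x = al *: p i + be *: r i.
Proof.
move=> hx; have := submx_trans hx (l_sub_pr i); case/submxP => D ->.
by exists (D 0 0), (D 0 1); rewrite mul_rv2_col.
Qed.

Lemma D2C (x y : 'rV[CC]_2) : D2 x y = - D2 y x.
Proof. rewrite /D2; ring. Qed.

Lemma c_dist i j : i != j -> D2 (c i) (c j) != 0.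
Proof.
move=> hij; apply/negP => /eqP hD.
have [s hs] : exists s, c j = s *: c i.
  by apply: par2; [exact: c_neq0 | rewrite D2C hD oppr0].
case: (p_prop j) => hpj _ hpjl; case: (p_prop i) => _ _ hpil.
apply: (meet_skew hij hpj _ hpjl).
by rewrite p_eq hs -scalemxAl -p_eq scalemx_sub.
Qed.

Lemma h_dist i j : i != j -> D2 (h i) (h j) != 0.
Proof.
move=> hij; apply/negP => /eqP hD.
have [s hs] : exists s, h j = s *: h i.
  by apply: par2; [exact: h_neq0 | rewrite D2C hD oppr0].
have hy : (r j - s *: r i <= L)%MS.
  by rewrite subL mulmxBl -scalemxAl -/(h i) -/(h j) hs subrr.
set y := (r j - s *: r i) *m PL.
have ey : r j - s *: r i = y *m L by exact: subL_eq.
have [al [be ey2]] : exists al be, y = al *: c i + be *: c j.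
  by exists (D2 y (c j) / D2 (c i) (c j)), (D2 (c i) y / D2 (c i) (c j)); apply: span2; apply: c_dist.
have eq2 : r j - be *: p j = s *: r i + al *: p i.
  apply/eqP; rewrite subr_eq -addrA addrC -subr_eq ey ey2 mulmxDl -!scalemxAl -!p_eq.
  by rewrite addrC.
case: (p_prop j) => _ _ hpj; case: (p_prop i) => _ _ hpi.
case: (r_prop j) => hrj _; case: (r_prop i) => hri _.
apply: (meet_skew (x := r j - be *: p j) hij).
- apply: contraNneq (h_neq0 j) => h0.
  have := congr1 (mulmx^~ PW) h0; rewrite mul0mx mulmxBl -scalemxAl.
  by case: (p_prop j) => _; rewrite subL => /eqP -> _; rewrite scaler0 subr0 /h => ->.
- by rewrite eq2 addmx_sub // scalemx_sub.
- by rewrite -scaleNr addmx_sub ?scalemx_sub.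
Qed.

Lemma transform_data i x v : exc_pt L x v -> proper_transform_pt L (l i) x v ->
  (exists2 al, al != 0 & x *m PL = al *: c i) /\ (exists mu, h i = mu *: (v *m PW)).
Proof.
move=> [[hx0 [hvL hxLv]] hxL] [_ [hxl hlLv]]; split.
- have [al [be ex]] := l_span hxl.
  have hbe : be = 0.
    move: hxL; rewrite subL ex mulmxDl -!scalemxAl.
    case: (p_prop i) => _; rewrite subL => /eqP -> _; rewrite scaler0 add0r.
    by rewrite scaler_eq0 (negbTE (h_neq0 i)) orbF => /eqP.
  move: ex; rewrite hbe scale0r addr0 => ex.
  exists al; first by apply/eqP => hal0; move: hx0; rewrite ex hal0 scale0r eqxx.
  by rewrite ex -scalemxAl.
- case: (r_prop i) => hri _.
  have := submx_trans hri hlLv; case/submxP => D eD.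
  exists (rsubmx D 0 0).
  rewrite /h eD -{1}[D]hsubmxK mul_row_col mulmxDl -mulmxA hLPW mulmx0 add0r.
  by rewrite -mulmxA mx11_mul.
Qed.

Lemma curve_zero (B : 'M[CC]_4) i x v : L *m B *m L^T = 0 ->
  exc_pt L x v -> proper_transform_pt L (l i) x v -> x *m B *m v^T = 0 ->
  fX (L *m B *m Z^T) (c i) (h i) = 0.
Proof.
move=> hB he hp hz.
have [[al hal ex] [mu emu]] := transform_data he hp.
have hxL : (x <= L)%MS by case: he.
have e0 : fX (L *m B *m Z^T) (x *m PL) (v *m PW) = 0.
  by rewrite /fX -form_rel // hz mxE.
move: e0; rewrite ex fXZl => /eqP; rewrite mulf_eq0 (negbTE hal) /= => /eqP e0.
by rewrite emu fXZr e0 mulr0.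
Qed.

Definition o1 : 'I_4 := lift ord0 ord0.
Definition o2 : 'I_4 := lift ord0 (lift ord0 ord0).
Definition o3 : 'I_4 := lift ord0 (lift ord0 (lift ord0 ord0)).

Lemma ord4P (P : 'I_4 -> Prop) : P ord0 -> P o1 -> P o2 -> P o3 -> forall k, P k.
Proof.
move=> P0 P1 P2 P3 [[|[|[|[|k]]]] Hk] //.
- by have -> : Ordinal Hk = ord0 by apply/val_inj.
- by have -> : Ordinal Hk = o1 by apply/val_inj.
- by have -> : Ordinal Hk = o2 by apply/val_inj.
- by have -> : Ordinal Hk = o3 by apply/val_inj.
Qed.

Definition coefN (hh cc : 'rV[CC]_2) (k : nat) : CC :=
  nth 0 [:: hh 0 0 * cc 0 1; - (hh 0 0 * cc 0 0);
            hh 0 1 * cc 0 1; - (hh 0 1 * cc 0 0)] k.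
Definition NN : 'M[CC]_4 := \matrix_(k, i) coefN (h i) (c i) k.
Definition G4 (g : 'rV[CC]_4) : 'M[CC]_2 := \matrix_(x < 2, y < 2)
  if x == 0 then (if y == 0 then g 0 ord0 else g 0 o1)
  else (if y == 0 then g 0 o2 else g 0 o3).
Definition X4 (z : 'rV[CC]_4) : 'M[CC]_2 := \matrix_(x < 2, y < 2)
  if x == 0 then (if y == 0 then - z 0 o1 else - z 0 o3)
  else (if y == 0 then z 0 ord0 else z 0 o2).

Lemma coef_sum (g : 'rV[CC]_4) (hh cc : 'rV[CC]_2) :
  \sum_(k < 4) g 0 k * coefN hh cc k = D2 (hh *m G4 g) cc.
Proof.
rewrite !big_ord_recl big_ord0 /D2 !vecmul2 !mxE /= -/o1 -/o2 -/o3 /coefN /=.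
ring.
Qed.

Lemma gN g i : (g *m NN) 0 i = D2 (h i *m G4 g) (c i).
Proof. by rewrite mxE -coef_sum; apply: eq_bigr => k _; rewrite mxE. Qed.

Lemma zN z i : (z *m NN) 0 i = fX (X4 z) (c i) (h i).
Proof.
rewrite mxE (eq_bigr (fun k => z 0 k * coefN (h i) (c i) k)); last first.
  by move=> k _; rewrite mxE.
rewrite fXE; move: (h i) (c i) => hh cc.
rewrite !big_ord_recl big_ord0 !mxE /= -/o1 -/o2 -/o3 /coefN /=.
ring.
Qed.

Lemma X4_neq0 z : z != 0 -> X4 z != 0.
Proof.
apply: contra_neq => hX; apply/rowP; apply: ord4P; rewrite mxE.
- by have := congr1 (fun M : 'M[CC]_2 => M 1 0) hX; rewrite !mxE.
- by have := congr1 (fun M : 'M[CC]_2 => M 0 0) hX; rewrite !mxE /= => /eqP; rewrite oppr_eq0 => /eqP.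
- by have := congr1 (fun M : 'M[CC]_2 => M 1 1) hX; rewrite !mxE.
- by have := congr1 (fun M : 'M[CC]_2 => M 0 1) hX; rewrite !mxE /= => /eqP; rewrite oppr_eq0 => /eqP.
Qed.

Lemma exists_form :
  (forall M, is_line M -> (forall i, lines_meet M (l i)) -> (M == L)%MS) ->
  exists2 X : 'M[CC]_2, X != 0 & forall i, fX X (c i) (h i) = 0.
Proof.
move=> huniq.
case: (eqVneq (\det NN) 0) => hdet.
  move/eqP: hdet => /det0P [z hz hzN].
  by exists (X4 z); [exact: X4_neq0 | move=> i; rewrite -zN hzN mxE].
exfalso.
have uN : NN \in unitmx by rewrite unitmxE unitfE.
pose dv : 'rV[CC]_4 := \row_i D2 (a i) (c i).
pose g := dv *m invmx NN.
have hg : g *m NN = dv by rewrite /g mulmxKV.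
pose G := G4 g.
have hs i : exists s, h i *m G - a i = s *: c i.
  apply: par2; first exact: c_neq0.
  by rewrite D2Bl -gN hg mxE subrr.
pose M := G *m L + Z.
have hMPW : M *m PW = 1%:M by rewrite mulmxDl -mulmxA hLPW mulmx0 add0r hZPW.
have hlM : is_line M.
  rewrite /is_line eqn_leq rank_leq_row /=.
  by have := mxrankM_maxl M PW; rewrite hMPW mxrank1.
have hmM i : lines_meet M (l i).
  have [s es] := hs i.
  have hq0 : h i *m M != 0.
    by apply: contraNneq (h_neq0 i) => e; rewrite -[h i]mulmx1 -hMPW mulmxA e mul0mx.
  exists (h i *m M); rewrite /on_line hq0 submxMl; split => //.
  have -> : h i *m M = s *: p i + r i.
    rewrite /M mulmxDr mulmxA.
    have -> : h i *m G = s *: c i + a i by rewrite -es subrK.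
    by rewrite mulmxDl -scalemxAl -p_eq r_eq addrA.
  case: (p_prop i) => _ _ hp; case: (r_prop i) => hr _.
  by rewrite addmx_sub ?scalemx_sub.
have := huniq M hlM hmM; case/andP => /submxP [D eD] _.
move: hMPW; rewrite eD -mulmxA hLPW mulmx0 => /matrixP /(_ 0 0).
by rewrite !mxE /= => /eqP; rewrite eq_sym oner_eq0.
Qed.

Lemma final :
  (forall M, is_line M -> (forall i, lines_meet M (l i)) -> (M == L)%MS) ->
  exists C, bideg11_curve L C /\ (forall i, meets_transform L (l i) C) /\
    forall C', bideg11_curve L C' -> (forall i, meets_transform L (l i) C') ->
      forall x v, C' x v <-> C x v.
Proof.
move=> huniq.
have [X hX hXc] := exists_form huniq.
pose B := PL *m X *m PW^T.
have hB : L *m B *m L^T = 0.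
  by rewrite /B !mulmxA hLPL mul1mx -mulmxA -trmx_mul hLPW trmx0 mulmx0.
have hXB : L *m B *m Z^T = X.
  by rewrite /B !mulmxA hLPL mul1mx -mulmxA -trmx_mul hZPW trmx1 mulmx1.
have hLB : L *m B != 0.
  by apply: contraNneq hX => e; rewrite -hXB e mul0mx.
exists (fun x v => exc_pt L x v /\ x *m B *m v^T = 0).
split; first by exists B; split => //; split.
split.
  move=> i; exists (p i), (r i).
  case: (p_prop i) => hp0 hpL hpl; case: (r_prop i) => hrl hrL'.
  have hbl : blowup_pt L (p i) (r i) by split => //; split => //; exact: sub_colL.
  split; first split => //.
    by apply/m11_0; rewrite form_rel // hXB -/(c i) -/(h i); exact: hXc.
  split => //; split => //.
  apply: submx_trans (l_sub_pr i) _.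
  by rewrite col_mx_sub sub_colv sub_colL.
move=> C' [B' [hB' [hLB' hC']]] hmC'.
have hX' := X_neq0 hB' hLB'.
have hz i : fX (L *m B' *m Z^T) (c i) (h i) = 0.
  have [x [v [hC hpt]]] := hmC' i.
  have [he hz] := (hC' x v).1 hC.
  exact: (curve_zero hB' he hpt hz).
have d01 : (ord0 : 'I_4) != o1 by [].
have d02 : (ord0 : 'I_4) != o2 by [].
have d12 : o1 != o2 by [].
have heq := @forms_equiv _ _ _ _ _ _ (c_dist d01) (c_dist d02) (c_dist d12)
  (h_dist d01) (h_dist d02) (h_dist d12) _ _ hX hX' (hXc _) (hXc _) (hXc _) (hz _) (hz _) (hz _).
move=> x v; rewrite hC'; split => -[he hzz]; split => //.
- have hxL : (x <= L)%MS by case: he.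
  apply/m11_0; move/m11_0: hzz; rewrite !form_rel // hXB => /eqP.
  by rewrite -/(fX _ _ _) -heq => /eqP.
- have hxL : (x <= L)%MS by case: he.
  apply/m11_0; move/m11_0: hzz; rewrite !form_rel // hXB => /eqP.
  by rewrite -/(fX _ _ _) heq => /eqP.
Qed.

End Split.

Theorem lemma6p13 (l : 'I_4 -> 'M[CC]_(2,4)) (L : 'M[CC]_(2,4)) :
  (forall i, is_line (l i)) ->
  (forall i j : 'I_4, i != j -> skew_lines (l i) (l j)) ->
  is_line L ->
  (forall i, lines_meet L (l i)) ->
  (forall M, is_line M -> (forall i, lines_meet M (l i)) -> (M == L)%MS) ->
  exists C, bideg11_curve L C /\ (forall i, meets_transform L (l i) C) /\
    forall C', bideg11_curve L C' -> (forall i, meets_transform L (l i) C') ->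
      forall x v, C' x v <-> C x v.
Proof.
move=> hline hskew hLl hmeet huniq.
have hrL : \rank L = 2%N by apply/eqP.
have [Z [PL [PW [h1 h2 h3 h4 h5]]]] := @split_line L hrL.
have hl : forall i, \rank (l i) = 2%N by move=> i; apply/eqP; exact: hline.
exact: (final h1 h2 h4 h5 hl hskew hmeet hrL huniq).
Qed.
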